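(* Fix a horizon $T\ge 1$. Consider a discrete-time system with control inputs $u=(u_0,\dots,u_{T-1})$, exogenous inputs $\delta=(\delta_0,\dots,\delta_T)$, and state $x_t=(x^{\rm aff}_t,x^{\rm cvx}_t)$, $t=0,\dots,T$, where the initial state is $x_0=f_0(\delta_0)$ for some mapping $f_0$, and for $t=1,\dots,T$ \[ x^{\rm aff}_t = A_t(\delta_t)x^{\rm aff}_{t-1}+B_t(\delta_t)u_{t-1}+w_t(\delta_t),\qquad x^{\rm cvx}_t = h_t(x^{\rm aff}_{t-1},x^{\rm cvx}_{t-1},u_{t-1},\delta_t), \] with $A_t(\delta_t),B_t(\delta_t)$ matrices, $w_t(\delta_t)$ vectors and $h_t$ vector-valued mappings. Let $x=\phi(u,\delta)$ denote the resulting state trajectory $(x_0,\dots,x_T)$, obtained by iterating the dynamics. Let $c_0,\dots,c_J$ be scalar-valued functions $c_j(x,u,\delta)$ that are convex in $(x,u)$ for every $\delta$. Suppose that for every $\delta$: (1) for $t=1,\dots,T$, each component (row) of $h_t$ is (a) jointly convex in $(x^{\rm aff}_{t-1},x^{\rm cvx}_{t-1},u_{t-1})$ and (b) nondecreasing in each element of $x^{\rm cvx}_{t-1}$; (2) for $j=0,\dots,J$, the function $(x^{\rm aff},x^{\rm cvx},u)\mapsto c_j((x^{\rm aff},x^{\rm cvx}),u,\delta)$ is nondecreasing in each element of $x^{\rm cvx}=(x^{\rm cvx}_0,\dots,x^{\rm cvx}_T)$. Then the system is a convex system, i.e., for every $\delta$ and every $j=0,\dots,J$, the function $u\mapsto c_j(\phi(u,\delta),u,\delta)$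 is convex.
   Context: Here $c_0$ plays the role of a cost and $c_1,\dots,c_J$ of constraint functions ($c_j\le 0$). A system with dynamics giving input-state map $\phi$, cost $c_0$ and constraints $c_1,\dots,c_J$ is called a convex system if $u\mapsto c_j(\phi(u,\delta),u,\delta)$ is convex for all $\delta$ and all $j=0,\dots,J$. The trajectory notation $x^{\rm aff}=(x^{\rm aff}_0,\dots,x^{\rm aff}_T)$ is used; all functions are finite-valued on the relevant domains. *)

(* Defs.v *)
From HB Require Import structures.
From mathcomp Require Import all_boot all_order all_algebra.
Set Implicit Arguments. Unset Strict Implicit. Unset Printing Implicit Defensive.
Import Order.TTheory GRing.Theory Num.Theory.
Local Open Scope ring_scope.

Section Defs.
Variable R : realFieldType.

Definition vmix (n : nat) (a : R) (x y : 'cV[R]_n) : 'cV[R]_n :=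
  a *: x + (1 - a) *: y.

Definition fmix (I : Type) (n : nat) (a : R) (x y : I -> 'cV[R]_n) : I -> 'cV[R]_n :=
  fun i => vmix a (x i) (y i).

Definition incr_at (n : nat) (k : 'I_n) (x x' : 'cV[R]_n) : Prop :=
  x k 0 <= x' k 0 /\ forall i : 'I_n, i != k -> x' i 0 = x i 0.

Definition incr_traj_at (T n : nat) (t : 'I_T) (k : 'I_n)
  (x x' : 'I_T -> 'cV[R]_n) : Prop :=
  x t k 0 <= x' t k 0 /\
  forall (s : 'I_T) (i : 'I_n), (s, i) != (t, k) -> x' s i 0 = x s i 0.

Definition ext (T : nat) (X : Type) (d : X) (u : 'I_T -> X) (s : nat) : X :=
  oapp u d (insub s).

Fixpoint traj (T na nc m : nat) (D : Type)
  (f0 : D -> 'cV[R]_na * 'cV[R]_nc)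
  (A : nat -> D -> 'M[R]_(na, na)) (B : nat -> D -> 'M[R]_(na, m))
  (w : nat -> D -> 'cV[R]_na)
  (h : nat -> 'cV[R]_na -> 'cV[R]_nc -> 'cV[R]_m -> D -> 'cV[R]_nc)
  (u : 'I_T -> 'cV[R]_m) (delta : 'I_T.+1 -> D) (t : nat)
  : 'cV[R]_na * 'cV[R]_nc :=
  let dl := ext (delta ord0) delta in
  let ul := ext 0 u in
  match t with
  | 0 => f0 (dl 0%N)
  | s.+1 =>
      let xs := traj f0 A B w h u delta s in
      (A s.+1 (dl s.+1) *m xs.1 + B s.+1 (dl s.+1) *m ul s + w s.+1 (dl s.+1),
       h s.+1 xs.1 xs.2 (ul s) (dl s.+1))
  end.

Definition phi_aff T na nc m D f0 A B w h u delta : 'I_T.+1 -> 'cV[R]_na :=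
  fun t => (@traj T na nc m D f0 A B w h u delta t).1.
Definition phi_cvx T na nc m D f0 A B w h u delta : 'I_T.+1 -> 'cV[R]_nc :=
  fun t => (@traj T na nc m D f0 A B w h u delta t).2.

End Defs.

(* Main.v *)
Require Import Defs.
From HB Require Import structures.
From mathcomp Require Import all_boot all_order all_algebra.
Import Order.TTheory GRing.Theory Num.Theory.
Local Open Scope ring_scope.

From Stdlib Require Import FunctionalExtensionality.
Set Implicit Arguments. Unset Strict Implicit. Unset Printing Implicit Defensive.

Lemma vec_mono (R : realFieldType) n (F : 'cV[R]_n -> R) :
  (forall k x x', incr_at k x x' -> F x <= F x') ->
  forall x y : 'cV[R]_n, (forall i, x i 0 <= y i 0) -> F x <= F y.
Proof.
move=> HF x y Hxy.
pose z (p : nat) := \col_i (if (i < p)%N then y i 0 else x i 0).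
have z0 : z 0%N = x by apply/matrixP=> i j; rewrite mxE ltn0 (ord1 j).
have zn : z n = y by apply/matrixP=> i j; rewrite mxE ltn_ord (ord1 j).
have step : forall p, (p <= n)%N -> F x <= F (z p).
  elim=> [|p IH] Hp; first by rewrite z0.
  apply: le_trans (IH (ltnW Hp)) _; apply: (HF (Ordinal Hp)); split.
    by rewrite !mxE /= ltnn ltnSn.
  move=> i Hi; rewrite !mxE ltnS leq_eqVlt.
  have -> : (nat_of_ord i == p) = false.
    by apply/negbTE; move: Hi; apply: contra => /eqP e; apply/eqP/val_inj.
  by [].
by rewrite -zn; apply: step.
Qed.

Lemma traj_mono (R : realFieldType) N n (F : ('I_N -> 'cV[R]_n) -> R) :
  (forall t k x x', incr_traj_at t k x x' -> F x <= F x') ->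
  forall x y : 'I_N -> 'cV[R]_n, (forall t i, x t i 0 <= y t i 0) -> F x <= F y.
Proof.
move=> HF.
have slice : forall t (x y : 'I_N -> 'cV[R]_n), (forall i, x t i 0 <= y t i 0) ->
    (forall s, s != t -> x s = y s) -> F x <= F y.
  move=> t x y Hi Hs.
  pose G v := F (fun s => if s == t then v else x s).
  have -> : F x = G (x t).
    by rewrite /G; congr F; apply: functional_extensionality => s;
       case: eqP => // ->.
  have -> : F y = G (y t).
    rewrite /G; congr F; apply: functional_extensionality => s.
    by case: eqP => [->//|/eqP ne]; rewrite Hs.
  apply: vec_mono => // k v v' [H1 H2]; apply: (HF t k); split; first by rewrite eqxx.
  move=> s i Hsi; case: eqP => [E|//]; apply: H2.
  by move: Hsi; rewrite E; apply: contra => /eqP ->.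
move=> x y Hxy.
pose z (p : nat) := fun s : 'I_N => if (s < p)%N then y s else x s.
have z0 : z 0%N = x by apply: functional_extensionality => s; rewrite /z ltn0.
have zn : z N = y by apply: functional_extensionality => s; rewrite /z ltn_ord.
have step : forall p, (p <= N)%N -> F x <= F (z p).
  elim=> [|p IH] Hp; first by rewrite z0.
  apply: le_trans (IH (ltnW Hp)) _; apply: (slice (Ordinal Hp)).
    by move=> i; rewrite /z /= ltnn ltnSn.
  move=> s Hs; rewrite /z [in RHS]ltnS [(s <= p)%N]leq_eqVlt.
  have -> : (nat_of_ord s == p) = false.
    by apply/negbTE; move: Hs; apply: contra => /eqP e; apply/eqP/val_inj.
  by [].
by rewrite -zn; apply: step.
Qed.

Lemma vmix_id (R : realFieldType) n (a : R) (v : 'cV[R]_n) : vmix a v v = v.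
Proof. by rewrite /vmix -scalerDl addrC subrK scale1r. Qed.

Lemma ext_mix (R : realFieldType) T m (a : R) (u1 u2 : 'I_T -> 'cV[R]_m) s :
  ext 0 (fmix a u1 u2) s = vmix a (ext 0 u1 s) (ext 0 u2 s).
Proof.
rewrite /ext; case: insubP => [i _ _ /=|_ /=]; first by [].
by rewrite /vmix !scaler0 addr0.
Qed.

Lemma rearr (V : zmodType) (p q r s t v : V) :
  p + q + (r + s) + (t + v) = p + r + t + (q + s + v).
Proof. by rewrite (addrACA p q r s) (addrACA (p + r)). Qed.

Theorem theorem1 (R : realFieldType) (T na nc m J : nat) (D : Type)
  (hT : (1 <= T)%N)
  (f0 : D -> 'cV[R]_na * 'cV[R]_nc)
  (A : nat -> D -> 'M[R]_(na, na)) (B : nat -> D -> 'M[R]_(na, m))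
  (w : nat -> D -> 'cV[R]_na)
  (h : nat -> 'cV[R]_na -> 'cV[R]_nc -> 'cV[R]_m -> D -> 'cV[R]_nc)
  (c : 'I_J.+1 -> ('I_T.+1 -> 'cV[R]_na) -> ('I_T.+1 -> 'cV[R]_nc) ->
         ('I_T -> 'cV[R]_m) -> ('I_T.+1 -> D) -> R)
  (* each c_j is jointly convex in (x, u) = ((x^aff, x^cvx), u) for every delta *)
  (c_cvx : forall (j : 'I_J.+1) (delta : 'I_T.+1 -> D) (a : R)
     (xa1 xa2 : 'I_T.+1 -> 'cV[R]_na) (xc1 xc2 : 'I_T.+1 -> 'cV[R]_nc)
     (u1 u2 : 'I_T -> 'cV[R]_m),
     0 <= a <= 1 ->
     c j (fmix a xa1 xa2) (fmix a xc1 xc2) (fmix a u1 u2) delta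
       <= a * c j xa1 xc1 u1 delta + (1 - a) * c j xa2 xc2 u2 delta)
  (* (1a) each row of h_t is jointly convex in (x^aff_{t-1}, x^cvx_{t-1}, u_{t-1}) *)
  (h_cvx : forall (t : nat) (d : D) (i : 'I_nc) (a : R)
     (xa1 xa2 : 'cV[R]_na) (xc1 xc2 : 'cV[R]_nc) (u1 u2 : 'cV[R]_m),
     (1 <= t <= T)%N -> 0 <= a <= 1 ->
     h t (vmix a xa1 xa2) (vmix a xc1 xc2) (vmix a u1 u2) d i 0
       <= a * h t xa1 xc1 u1 d i 0 + (1 - a) * h t xa2 xc2 u2 d i 0)
  (* (1b) each row of h_t is nondecreasing in each element of x^cvx_{t-1} *)
  (h_mono : forall (t : nat) (d : D) (i k : 'I_nc)
     (xa : 'cV[R]_na) (xc xc' : 'cV[R]_nc) (u : 'cV[R]_m),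
     (1 <= t <= T)%N -> incr_at k xc xc' ->
     h t xa xc u d i 0 <= h t xa xc' u d i 0)
  (* (2) each c_j is nondecreasing in each element of x^cvx = (x^cvx_0..x^cvx_T) *)
  (c_mono : forall (j : 'I_J.+1) (delta : 'I_T.+1 -> D) (t : 'I_T.+1) (k : 'I_nc)
     (xa : 'I_T.+1 -> 'cV[R]_na) (xc xc' : 'I_T.+1 -> 'cV[R]_nc)
     (u : 'I_T -> 'cV[R]_m),
     incr_traj_at t k xc xc' -> c j xa xc u delta <= c j xa xc' u delta) :
  (* conclusion: convex system, u |-> c_j(phi(u, delta), u, delta) is convex *)
  forall (delta : 'I_T.+1 -> D) (j : 'I_J.+1) (a : R) (u1 u2 : 'I_T -> 'cV[R]_m),
    0 <= a <= 1 ->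
    c j (phi_aff f0 A B w h (fmix a u1 u2) delta)
        (phi_cvx f0 A B w h (fmix a u1 u2) delta) (fmix a u1 u2) delta
    <= a * c j (phi_aff f0 A B w h u1 delta) (phi_cvx f0 A B w h u1 delta) u1 delta
       + (1 - a) * c j (phi_aff f0 A B w h u2 delta) (phi_cvx f0 A B w h u2 delta) u2 delta.
Proof.
move=> delta j a u1 u2 Ha.
set X := traj f0 A B w h (fmix a u1 u2) delta.
set X1 := traj f0 A B w h u1 delta.
set X2 := traj f0 A B w h u2 delta.
have Haff : forall t, (X t).1 = vmix a (X1 t).1 (X2 t).1.
  elim=> [|s IH]; first by rewrite /X /X1 /X2 /= vmix_id.
  rewrite /X /X1 /X2 /= -/X -/X1 -/X2 IH ext_mix.
  set Am := A _ _; set Bm := B _ _; set wv := w _ _.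
  have hw : wv = a *: wv + (1 - a) *: wv by have := vmix_id a wv.
  rewrite /vmix !mulmxDr -!scalemxAr !scalerDr {1}hw.
  by rewrite rearr.
have Hcvx : forall t, (t <= T)%N -> forall i,
    (X t).2 i 0 <= vmix a (X1 t).2 (X2 t).2 i 0.
  elim=> [|s IH] Hs i; first by rewrite /X /X1 /X2 /= vmix_id.
  rewrite /X /X1 /X2 /= -/X -/X1 -/X2 Haff ext_mix.
  have Hc := h_cvx (s.+1) (ext (delta ord0) delta s.+1) i a (X1 s).1 (X2 s).1
    (X1 s).2 (X2 s).2 (ext 0 u1 s) (ext 0 u2 s).
  rewrite {3}/vmix !mxE; apply: le_trans (Hc _ Ha); last by rewrite Hs.
  apply: (vec_mono (F := fun v => h s.+1 _ v _ _ i 0)).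
    by move=> k x x' Hk; apply: (h_mono _ _ _ k _ x x') => //; rewrite /= Hs.
  by apply: IH; apply: ltnW.
have -> : phi_aff f0 A B w h (fmix a u1 u2) delta =
    fmix a (phi_aff f0 A B w h u1 delta) (phi_aff f0 A B w h u2 delta).
  by apply: functional_extensionality => t; rewrite /phi_aff /fmix Haff.
apply: le_trans (c_cvx _ _ _ _ _ _ _ _ _ Ha).
apply: (traj_mono (F := fun xc => c j _ xc _ delta)) => [t k x x' Hk|t i]; first exact: c_mono Hk.
by rewrite /phi_cvx /fmix; apply: Hcvx; rewrite -ltnS.
Qed.
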